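(* Let $H_{2n}$ denote the Kauffman bracket evaluation of the tetrahedron graph with all six edges colored $2n$. Then the tail of the sequence $\{H_{2n}\}_{n\in\mathbb{N}}$ is $$T(H_{2n})=\frac{(q;q)_\infty^3}{1-q}\sum_{i=0}^{\infty}\frac{(-1)^i q^{(i+3i^2)/2}}{(q;q)_i^3}.$$
   Context: $(q;q)_m=\prod_{k=1}^m(1-q^k)$ ($(q;q)_0=1$), $(q;q)_\infty=\prod_{k\ge1}(1-q^k)$. With $q=A^4$, the tetrahedron evaluation satisfies the closed form $$H_{2n}=\frac{q^{-2n}(q;q)_n^{12}}{(1-q)(q;q)_{2n}^6}\sum_{i=0}^{n}\frac{(-1)^i q^{(i+3i^2)/2}(q;q)_{4n-i}}{(q;q)_{n-i}^4(q;q)_i^3}.$$ Rational functions are identified with their Laurent series expansions in $q$ (normalized to lie in $\mathbb{Z}[q^{-1}][[q]]$). For non-zero Laurent series $P_1,P_2$, $P_1\doteq_nP_2$ means their first $n$ coefficients (starting from each one's minimal degree) agree up to a common sign. The tail of a sequence $\{P_n\}$ is the series $T$ of minimal degree $0$ with $T\doteq_nP_n$ for every $n$ (determined up to sign). *)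

(* Defs.v *)
(* Formal power series with integer coefficients are
   represented by their coefficient functions  nat -> int; Laurent series in
   Z[q^-1][[q]] by a pair (shift v, power series f) meaning q^v * f. *)
From HB Require Import structures.
From mathcomp Require Import all_boot all_order all_algebra.
Set Implicit Arguments. Unset Strict Implicit. Unset Printing Implicit Defensive.
Import Order.TTheory GRing.Theory Num.Theory.
Local Open Scope ring_scope.

Definition series := nat -> int.

Definition sone : series := fun k => ((k == 0)%N)%:Z.
Definition smono (e : nat) : series := fun k => ((k == e)%N)%:Z.
Definition sadd (f g : series) : series := fun k => f k + g k.
Definition sopp (f : series) : series := fun k => - f k.
Definition sscale (c : int) (f : series) : series := fun k => c * f k.
Definition smul (f g : series) : series :=
  fun k => \sum_(i < k.+1) f i * g (k - i)%N.
Definition spow (f : series) (e : nat) : series := iter e (smul f) sone.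

Definition qpoch (m : nat) : series :=
  foldr smul sone [seq sadd sone (sopp (smono k)) | k <- iota 1 m].
(* 1/(1-q^k) = sum_j q^{jk}, for k >= 1 *)
Definition geom (k : nat) : series := fun j => ((k %| j)%N)%:Z.
Definition qpochinv (m : nat) : series :=
  foldr smul sone [seq geom k | k <- iota 1 m].
(* (q;q)_oo : its coefficient of q^k equals that of (q;q)_k, since the
   factors (1-q^j), j > k, do not affect it. *)
Definition qpochinf : series := fun k => qpoch k k.

(* exponent (i + 3 i^2)/2 (always an integer) *)
Definition ex (i : nat) : nat := ((i + 3 * i ^ 2) %/ 2)%N.

Definition laurent := (int * series)%type.
Definition lcoef (P : laurent) (d : int) : int :=
  match d - P.1 with Posz k => P.2 k | Negz _ => 0 end.

Definition is_mindeg (P : laurent) (d : int) : Prop :=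
  lcoef P d != 0 /\ forall d', d' < d -> lcoef P d' = 0.

Definition deq (n : nat) (P1 P2 : laurent) : Prop :=
  exists d1 d2 (s : int), is_mindeg P1 d1 /\ is_mindeg P2 d2 /\
    (s = 1 \/ s = -1) /\
    forall k : nat, (k < n)%N -> lcoef P1 (d1 + k%:Z) = s * lcoef P2 (d2 + k%:Z).

Definition is_tail (T : laurent) (P : nat -> laurent) : Prop :=
  is_mindeg T 0 /\ forall n : nat, deq n T (P n).

(* H_{2n}, via the closed form of the context, expanded as a Laurent series *)
Definition Hsum (n : nat) : series :=
  fun k => \sum_(i < n.+1)
    smul (sscale ((-1) ^+ i) (smono (ex i)))
      (smul (qpoch (4 * n - i))
         (smul (spow (qpochinv (n - i)) 4) (spow (qpochinv i) 3))) k.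
Definition H2n (n : nat) : laurent :=
  (- (2 * n)%N%:Z,
   smul (spow (qpoch n) 12)
     (smul (geom 1) (smul (spow (qpochinv (2 * n)) 6) (Hsum n)))).

(* sum_{i>=0} (-1)^i q^{(i+3i^2)/2} / (q;q)_i^3 ; since ex i >= i, only the
   terms i <= k contribute to the coefficient of q^k *)
Definition tailsum : series :=
  fun k => \sum_(i < k.+1)
    smul (sscale ((-1) ^+ i) (smono (ex i))) (spow (qpochinv i) 3) k.

Definition tailT : laurent :=
  (0, smul (spow qpochinf 3) (smul (geom 1) tailsum)).

(* Main.v *)
Require Import Defs.
From HB Require Import structures.
From mathcomp Require Import all_boot all_order all_algebra.
From mathcomp Require Import ring zify.
Set Implicit Arguments. Unset Strict Implicit. Unset Printing Implicit Defensive.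
Import Order.TTheory GRing.Theory Num.Theory.
Local Open Scope ring_scope.

Definition rep (N : nat) (f : series) (p : {poly int}) :=
  forall k, (k < N)%N -> f k = p`_k.
Definition modX (N : nat) (p q : {poly int}) :=
  exists r : {poly int}, p - q = 'X^N * r.

Section ModX.
Variable N : nat.
Implicit Types p q : {poly int}.

Lemma modX_refl p : modX N p p.
Proof. by exists 0; rewrite subrr mulr0. Qed.

Lemma modX_sym p q : modX N p q -> modX N q p.
Proof. by case=> r H; exists (- r); rewrite -opprB H mulrN. Qed.

Lemma modX_trans p q s : modX N p q -> modX N q s -> modX N p s.
Proof.
case=> r1 H1 [r2 H2]; exists (r1 + r2).
by rewrite mulrDr -H1 -H2 addrA subrK.
Qed.

Lemma modX_add p1 p2 q1 q2 : modX N p1 q1 -> modX N p2 q2 ->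
  modX N (p1 + p2) (q1 + q2).
Proof.
case=> r1 H1 [r2 H2]; exists (r1 + r2).
have -> : p1 + p2 - (q1 + q2) = (p1 - q1) + (p2 - q2) by ring.
by rewrite H1 H2 mulrDr.
Qed.

Lemma modX_mul p1 p2 q1 q2 : modX N p1 q1 -> modX N p2 q2 ->
  modX N (p1 * p2) (q1 * q2).
Proof.
case=> r1 H1 [r2 H2]; exists (r1 * p2 + q1 * r2).
have -> : p1 * p2 - q1 * q2 = (p1 - q1) * p2 + q1 * (p2 - q2) by ring.
rewrite H1 H2; ring.
Qed.

Lemma modX_mull c p q : modX N p q -> modX N (c * p) (c * q).
Proof. by apply: modX_mul; apply: modX_refl. Qed.

Lemma modX_mulr c p q : modX N p q -> modX N (p * c) (q * c).
Proof. by move=> H; apply: modX_mul => //; apply: modX_refl. Qed.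

Lemma modX_pow p q m : modX N p q -> modX N (p ^+ m) (q ^+ m).
Proof.
move=> H; elim: m => [|m IH]; first by rewrite !expr0; apply: modX_refl.
by rewrite !exprS; apply: modX_mul.
Qed.

Lemma modX_coef p q k : modX N p q -> (k < N)%N -> p`_k = q`_k.
Proof.
case=> r H lt; have -> : p = q + 'X^N * r by rewrite -H addrC subrK.
by rewrite coefD coefXnM lt addr0.
Qed.

Lemma modX_X0 a s : (N <= a)%N -> modX N ('X^a * s) 0.
Proof.
move=> le; exists ('X^(a - N) * s).
by rewrite subr0 mulrA -exprD subnKC.
Qed.

Lemma modX_prod1 (s : seq nat) (F : nat -> {poly int}) :
  (forall x, x \in s -> modX N (F x) 1) -> modX N (\prod_(x <- s) F x) 1.
Proof.
elim: s => [|x s IH] H; first by rewrite big_nil; apply: modX_refl.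
rewrite big_cons; suff: modX N (F x * \prod_(y <- s) F y) (1 * 1) by rewrite mulr1.
apply: modX_mul.
  by apply: H; rewrite inE eqxx.
by apply: IH => y ys; apply: H; rewrite inE ys orbT.
Qed.

Lemma modX_sum m (F G : nat -> {poly int}) :
  (forall i, (i < m)%N -> modX N (F i) (G i)) ->
  modX N (\sum_(i < m) F i) (\sum_(i < m) G i).
Proof.
move=> H; apply: (big_ind2 (fun a b => modX N a b)).
- exact: modX_refl.
- by move=> *; apply: modX_add.
- by move=> i _; apply: H.
Qed.

End ModX.

Section Rep.
Variable N : nat.

Lemma rep_mod f p q : rep N f p -> modX N p q -> rep N f q.
Proof. by move=> H M k lt; rewrite H // (modX_coef M). Qed.

Lemma rep_sone : rep N sone 1.
Proof. by move=> k _; rewrite coef1 natz. Qed.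

Lemma rep_smono e : rep N (smono e) 'X^e.
Proof. by move=> k _; rewrite coefXn natz. Qed.

Lemma rep_sadd f g p q : rep N f p -> rep N g q -> rep N (sadd f g) (p + q).
Proof. by move=> Hf Hg k lt; rewrite coefD /sadd Hf ?Hg. Qed.

Lemma rep_sopp f p : rep N f p -> rep N (sopp f) (- p).
Proof. by move=> Hf k lt; rewrite coefN /sopp Hf. Qed.

Lemma rep_sscale c f p : rep N f p -> rep N (sscale c f) (c%:P * p).
Proof. by move=> Hf k lt; rewrite coefCM /sscale Hf. Qed.

Lemma rep_smul f g p q : rep N f p -> rep N g q -> rep N (smul f g) (p * q).
Proof.
move=> Hf Hg k lt; rewrite coefM /smul; apply: eq_bigr => j _.
have hj : (j <= k)%N by rewrite -ltnS.
rewrite Hf ?Hg //; first by apply: leq_ltn_trans lt; apply: leq_subr.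
exact: leq_ltn_trans lt.
Qed.

Lemma rep_spow f p e : rep N f p -> rep N (spow f e) (p ^+ e).
Proof.
move=> Hf; elim: e => [|e IH]; first by rewrite expr0; apply: rep_sone.
by rewrite exprS; apply: rep_smul.
Qed.

Lemma rep_foldr (s : seq nat) (F : nat -> series) (P : nat -> {poly int}) :
  (forall x, x \in s -> rep N (F x) (P x)) ->
  rep N (foldr smul sone [seq F x | x <- s]) (\prod_(x <- s) P x).
Proof.
elim: s => [|x s IH] H; first by rewrite big_nil; apply: rep_sone.
rewrite big_cons /=; apply: rep_smul; first by apply: H; rewrite inE eqxx.
by apply: IH => y ys; apply: H; rewrite inE ys orbT.
Qed.

Lemma rep_sum m (F : nat -> series) (P : nat -> {poly int}) :
  (forall i, (i < m)%N -> rep N (F i) (P i)) ->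
  rep N (fun k => \sum_(i < m) F i k) (\sum_(i < m) P i).
Proof.
move=> H k lt; rewrite coef_sum; apply: eq_bigr => i _; exact: H.
Qed.

End Rep.

Definition Pq (m : nat) : {poly int} := \prod_(j <- iota 1 m) (1 - 'X^j).
Definition Gp (N k : nat) : {poly int} := \sum_(t < N) 'X^(k * t).
Definition Gi (N m : nat) : {poly int} := \prod_(j <- iota 1 m) Gp N j.

Lemma rep_qpoch N m : rep N (qpoch m) (Pq m).
Proof.
apply: rep_foldr => x _; apply: rep_sadd; first exact: rep_sone.
by apply: rep_sopp; apply: rep_smono.
Qed.

Lemma coef_Gp N k j : (0 < k)%N -> (j < N)%N -> (Gp N k)`_j = ((k %| j)%N)%:Z.
Proof.
move=> k0 jN; rewrite /Gp coef_sum.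
under eq_bigr do rewrite coefXn natz.
case: (boolP (k %| j)%N) => dv.
  have tN : (j %/ k < N)%N by apply: leq_ltn_trans jN; apply: leq_div.
  rewrite (bigD1 (Ordinal tN)) //= mulnC divnK // eqxx big1 ?addr0 //.
  move=> i /eqP ne; apply/eqP; rewrite eqz_nat eqb0; apply/eqP => E.
  apply: ne; apply: val_inj => /=; rewrite E mulKn //.
rewrite big1 // => i _; apply/eqP; rewrite eqz_nat eqb0; apply/eqP => E.
by move: dv; rewrite E dvdn_mulr.
Qed.

Lemma rep_geom N k : (0 < k)%N -> rep N (geom k) (Gp N k).
Proof. by move=> k0 j jN; rewrite coef_Gp. Qed.

Lemma rep_qpochinv N m : rep N (qpochinv m) (Gi N m).
Proof.
apply: rep_foldr => x; rewrite mem_iota => /andP[x0 _]; exact: rep_geom.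
Qed.

Lemma Gp_inv N k : (0 < k)%N -> modX N ((1 - 'X^k) * Gp N k) 1.
Proof.
move=> k0.
have -> : (1 - 'X^k) * Gp N k = 1 - 'X^(k * N).
  rewrite /Gp mulr_sumr.
  have E : forall t : 'I_N, (1 - 'X^k) * 'X^(k * t) =
     - ('X^(k * t.+1) - 'X^(k * t) : {poly int}).
    by move=> t; rewrite mulnS exprD; ring.
  rewrite (eq_bigr _ (fun t _ => E t)) sumrN.
  rewrite -(big_mkord xpredT (fun t => 'X^(k * t.+1) - 'X^(k * t))).
  by rewrite telescope_sumr // muln0 expr0 opprB.
exists (- 'X^(k * N - N)).
rewrite addrC addKr mulrN -exprD subnKC //.
by rewrite leq_pmull.
Qed.

Lemma PGi N m : modX N (Pq m * Gi N m) 1.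
Proof.
rewrite /Pq /Gi -big_split /=; apply: modX_prod1 => x.
rewrite mem_iota => /andP[x0 _]; exact: Gp_inv.
Qed.

Definition onep (b : nat) (p : {poly int}) := exists s, p = 1 + 'X^b * s.

Lemma onep_prod b (s : seq nat) (F : nat -> {poly int}) :
  (forall x, x \in s -> onep b (F x)) -> onep b (\prod_(x <- s) F x).
Proof.
elim: s => [|x s IH] H; first by exists 0; rewrite big_nil mulr0 addr0.
rewrite big_cons.
have [t1 ->] : onep b (F x) by apply: H; rewrite inE eqxx.
have [t2 ->] : onep b (\prod_(y <- s) F y).
  by apply: IH => y ys; apply: H; rewrite inE ys orbT.
exists (t1 + t2 + 'X^b * t1 * t2); ring.
Qed.

Lemma Pq_split a m : (a <= m)%N -> exists s, Pq m = Pq a * (1 + 'X^(a.+1) * s).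
Proof.
move=> le.
have -> : Pq m = Pq a * \prod_(j <- iota a.+1 (m - a)) (1 - 'X^j).
  by rewrite /Pq -{1}(subnKC le) iotaD big_cat add1n.
have [s ->] : onep a.+1 (\prod_(j <- iota a.+1 (m - a)) (1 - 'X^j)).
  apply: onep_prod => x; rewrite mem_iota => /andP[ax _].
  exists (- 'X^(x - a.+1)); rewrite mulrN -exprD subnKC //.
by exists s.
Qed.

Lemma modX_onep N b e P s : (N <= e + b)%N ->
  modX N ('X^e * (P * (1 + 'X^b * s))) ('X^e * P).
Proof.
move=> le; exists ('X^(e + b - N) * (P * s)).
rewrite [RHS]mulrA -exprD subnKC // exprD; ring.
Qed.

Lemma modX_powX N e a b m : modX N ('X^e * a) ('X^e * b) ->
  modX N ('X^e * a ^+ m) ('X^e * b ^+ m).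
Proof.
move=> H; elim: m => [|m IH]; first by rewrite !expr0; apply: modX_refl.
apply: (@modX_trans _ _ (('X^e * b ^+ m) * a)).
  by rewrite exprSr mulrA; apply: modX_mulr.
have -> : 'X^e * b ^+ m * a = b ^+ m * ('X^e * a) by ring.
have -> : 'X^e * b ^+ m.+1 = b ^+ m * ('X^e * b) by rewrite exprSr; ring.
by apply: modX_mull.
Qed.

Lemma ex_ge i : (i <= ex i)%N.
Proof.
rewrite /ex; have -> : i = ((i + i) %/ 2)%N by rewrite addnn -mul2n mulKn.
rewrite {-1}addnn -mul2n mulKn //; apply: leq_div2r; rewrite leq_add2l.
by case: i => // i; rewrite expnS mulnA leq_pmull // muln_gt0.
Qed.

Section Main.
Variable n : nat.
Local Notation N := n.+1.
Local Notation P := (Pq n).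
Local Notation I := (Gi N n).

Lemma C1 m : (n <= m)%N -> modX N (Pq m) P.
Proof.
move=> le; have [s ->] := Pq_split le.
have H := @modX_onep N N 0%N P s (leqnn N).
rewrite expr0 !mul1r in H; exact: H.
Qed.

Lemma C2 i : (i <= n)%N ->
  modX N ('X^(ex i) * Gi N (n - i)) ('X^(ex i) * I).
Proof.
move=> le; set e := ex i; set J := Gi N (n - i).
have [s Es] := Pq_split (leq_subr i n).
have M : modX N ('X^e * P) ('X^e * Pq (n - i)).
  rewrite Es; apply: modX_onep.
  have := ex_ge i; rewrite /e => h.
  rewrite addnS ltnS; apply: (leq_trans _ (leq_add h (leqnn _))); rewrite subnKC //.
apply: (@modX_trans _ _ ('X^e * J * (P * I))).
  by rewrite -[X in modX _ X _]mulr1; apply: modX_mull; apply: modX_sym; apply: PGi.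
have -> : 'X^e * J * (P * I) = ('X^e * P) * (J * I) by ring.
apply: (@modX_trans _ _ (('X^e * Pq (n - i)) * (J * I))); first exact: modX_mulr.
have -> : 'X^e * Pq (n - i) * (J * I) = 'X^e * I * (Pq (n - i) * J) by ring.
by rewrite -[X in modX _ _ X]mulr1; apply: modX_mull; apply: PGi.
Qed.

Lemma C3 : modX N (Gi N (2 * n)) I.
Proof.
set G := Gi N (2 * n).
have h1 : modX N (P * I) 1 := PGi N n.
have h2 : modX N (Pq (2 * n)) P by apply: C1; rewrite mul2n -addnn leq_addr.
have h3 : modX N (G * Pq (2 * n)) 1 by rewrite mulrC; exact: PGi.
have e1 : modX N (G * 1) (G * (P * I)) := modX_mull G (modX_sym h1).
have e2 : modX N ((G * P) * I) ((G * Pq (2 * n)) * I) :=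
  modX_mulr I (modX_mull G (modX_sym h2)).
have e3 : modX N ((G * Pq (2 * n)) * I) (1 * I) := modX_mulr I h3.
rewrite mulr1 mulrA in e1; rewrite mul1r in e3.
exact: modX_trans e1 (modX_trans e2 e3).
Qed.

Definition term (i : nat) : {poly int} :=
  ((-1) ^+ i)%:P * 'X^(ex i) * Gi N i ^+ 3.
Definition S : {poly int} := \sum_(i < N) term i.
Definition Hp : {poly int} := \sum_(i < N)
  ((-1) ^+ i)%:P * 'X^(ex i) * (Pq (4 * n - i) * (Gi N (n - i) ^+ 4 * Gi N i ^+ 3)).
Definition Q : {poly int} := P ^+ 3 * (Gp N 1 * S).

Lemma rep_tailsum : rep N tailsum S.
Proof.
move=> k lt; rewrite /tailsum /S coef_sum.
have Rt : forall i, (smul (sscale ((-1) ^+ i) (smono (ex i))) (spow (qpochinv i) 3)) k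
   = (term i)`_k.
  move=> i.
  have R : rep N (smul (sscale ((-1) ^+ i) (smono (ex i))) (spow (qpochinv i) 3)) (term i).
    apply: rep_smul; first by apply: rep_sscale; apply: rep_smono.
    by apply: rep_spow; apply: rep_qpochinv.
  exact: R.
have T0 : forall i, (k < i)%N -> (term i)`_k = 0.
  move=> i ki; rewrite /term -mulrA coefCM coefXnM.
  by rewrite (leq_trans ki (ex_ge i)) mulr0.
rewrite (big_ord_widen _ (fun i => smul (sscale ((-1) ^+ i) (smono (ex i))) (spow (qpochinv i) 3) k) lt).
rewrite big_mkcond /=; apply: eq_bigr => i _; rewrite Rt.
by case: ifP => // h; rewrite T0 // ltnNge -ltnS h.
Qed.

Lemma rep_Hsum : rep N (Hsum n) Hp.
Proof.
move=> k lt; rewrite /Hsum /Hp coef_sum; apply: eq_bigr => i _.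
have R : rep N (smul (sscale ((-1) ^+ i) (smono (ex i)))
      (smul (qpoch (4 * n - i))
         (smul (spow (qpochinv (n - i)) 4) (spow (qpochinv i) 3))))
  (((-1) ^+ i)%:P * 'X^(ex i) * (Pq (4 * n - i) * (Gi N (n - i) ^+ 4 * Gi N i ^+ 3))).
  apply: rep_smul; first by apply: rep_sscale; apply: rep_smono.
  apply: rep_smul; first exact: rep_qpoch.
  by apply: rep_smul; apply: rep_spow; apply: rep_qpochinv.
exact: R.
Qed.

Lemma modHp : modX N Hp (P * I ^+ 4 * S).
Proof.
rewrite /S /Hp mulr_sumr.
apply: (modX_sum (F := fun i => ((-1) ^+ i)%:P * 'X^(ex i) *
   (Pq (4 * n - i) * (Gi N (n - i) ^+ 4 * Gi N i ^+ 3)))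
   (G := fun i => P * I ^+ 4 * term i)) => i lt.
have le : (i <= n)%N by rewrite -ltnS.
rewrite /term; set c := ((-1) ^+ i)%:P; set e := ex i.
apply: (@modX_trans _ _ (c * 'X^e * (P * (Gi N (n - i) ^+ 4 * Gi N i ^+ 3)))).
  apply: modX_mull; apply: modX_mulr; apply: C1.
  clear -le; lia.
have -> : c * 'X^e * (P * (Gi N (n - i) ^+ 4 * Gi N i ^+ 3)) =
  ('X^e * Gi N (n - i) ^+ 4) * (c * P * Gi N i ^+ 3) by ring.
have -> : P * I ^+ 4 * (c * 'X^e * Gi N i ^+ 3) =
  ('X^e * I ^+ 4) * (c * P * Gi N i ^+ 3) by ring.
by apply: modX_mulr; apply: modX_powX; apply: C2.
Qed.

Lemma repA : rep N (H2n n).2 Q.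
Proof.
have R : rep N (H2n n).2 (P ^+ 12 * (Gp N 1 * (Gi N (2 * n) ^+ 6 * Hp))).
  apply: rep_smul; first by apply: rep_spow; apply: rep_qpoch.
  apply: rep_smul; first exact: rep_geom.
  apply: rep_smul; first by apply: rep_spow; apply: rep_qpochinv.
  exact: rep_Hsum.
apply: (rep_mod R).
apply: (@modX_trans _ _ (P ^+ 12 * (Gp N 1 * (I ^+ 6 * (P * I ^+ 4 * S))))).
  apply: modX_mull; apply: modX_mull; apply: modX_mul; last exact: modHp.
  by apply: modX_pow; apply: C3.
have -> : P ^+ 12 * (Gp N 1 * (I ^+ 6 * (P * I ^+ 4 * S))) =
   (P * I) ^+ 10 * Q by rewrite /Q; ring.
rewrite -[X in modX _ _ X]mul1r; apply: modX_mulr.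
by rewrite -(expr1n _ 10); apply: modX_pow; apply: PGi.
Qed.

Lemma rep_qpochinf : rep N qpochinf P.
Proof.
move=> k lt; rewrite /qpochinf (rep_qpoch (N := k.+1)) //.
have [s ->] := Pq_split (lt : (k <= n)%N).
by rewrite mulrDr mulr1 coefD mulrCA coefXnM ltnSn addr0.
Qed.

Lemma repB : rep N tailT.2 Q.
Proof.
apply: rep_smul; first by apply: rep_spow; apply: rep_qpochinf.
apply: rep_smul; first exact: rep_geom.
exact: rep_tailsum.
Qed.

End Main.

Lemma lcoef_shift (L : laurent) (k : nat) : lcoef L (L.1 + k%:Z) = L.2 k.
Proof. by rewrite /lcoef addrAC subrr add0r. Qed.

Lemma mindeg_of (L : laurent) : L.2 0%N != 0 -> is_mindeg L L.1.
Proof.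
move=> H; split.
  by have := lcoef_shift L 0; rewrite addr0 => ->.
move=> d lt; rewrite /lcoef; case E: (d - L.1) => [m|m] //.
by move: lt; rewrite -subr_lt0 E.
Qed.

Lemma tail0 : tailT.2 0%N = 1.
Proof.
rewrite (@repB 0 0%N) // /Q /S /Pq /Gi big_ord1 /term /= !big_nil expr0 !expr1n.
rewrite /Gp big_ord1 muln0 expr0 /Gi big_nil expr1n polyC1 !mul1r.
by rewrite coef1.
Qed.

Theorem mainTheorem7 : is_tail tailT H2n.
Proof.
split; first by apply: mindeg_of; rewrite tail0.
move=> n; exists tailT.1, (H2n n).1, 1.
have eqk : forall k, (k < n.+1)%N -> tailT.2 k = (H2n n).2 k.
  by move=> k lt; rewrite (repB lt) (repA lt).
split; first by apply: mindeg_of; rewrite tail0.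
split; first by apply: mindeg_of; rewrite -eqk // tail0.
split; first by left.
move=> k lt; rewrite !lcoef_shift mul1r; apply: eqk; exact: ltnW.
Qed.
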